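(* Let $m\ge5$ be an odd integer and $h\ge1$ an integer, and set $n'=2^{m+h-2}-2^{m-2}-2^{\frac{m-1}{2}}$. Let $\mathbf{C}_0$ be a projective binary linear $[2^{m-2},m-1,2^{m-3}-2^{\frac{m-3}{2}}]_2$ code with maximum weight $2^{m-3}+2^{\frac{m-3}{2}}$, and let $\mathbf{C}_1$ be its simplex complementary code of dimension $m+h-1$, a $[2^{m+h-1}-2^{m-2}-1,\ m+h-1,\ 2^{m+h-2}-2^{m-3}-2^{\frac{m-3}{2}}]_2$ code with maximum weight $2^{m+h-2}$. Then the code $\mathbf{C}'$ obtained from $\mathbf{C}_1$ by the extension construction is a minimal binary linear $[2^{m+h-1}-2^{m-2}-1+n',\ m+h-1,\ 2^{m+h-2}-2^{m-3}-2^{\frac{m-3}{2}}]_2$ code with maximum weight $2^{m+h-1}-2^{m-2}-2^{\frac{m-1}{2}}$ (that is, $2^{m+h-2}+n'$), and it violates the Ashikhmin–Barg condition.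
   Context: Projective code: columns of a generator matrix are nonzero and pairwise distinct (binary case). Simplex complementary code of dimension $K=k+h$ of a projective binary $[n,k]$ code: append $h$ zeros to the columns of a generator matrix and take the code generated by the matrix whose columns are all nonzero vectors of $\mathbf{F}_2^K$ other than these $n$. Extension construction for a binary $[N,K]$ code $\mathbf{D}$, $K\ge2$, with minimum nonzero weight $w_{min}$, maximum weight $w_{max}$ and $n'=2w_{min}-w_{max}\ge1$: choose a basis $\mathbf{r}_1,\dots,\mathbf{r}_K$ with $wt(\mathbf{r}_1)=w_{max}$, $wt(\mathbf{r}_2)=w_{min}$; the extended code is generated by $(\mathbf{1},\mathbf{r}_1),(\mathbf{0},\mathbf{r}_2),\dots,(\mathbf{0},\mathbf{r}_K)$ in $\mathbf{F}_2^{n'+N}$. Minimal code: nonzero codewords with nested supports are equal. Ashikhmin–Barg condition (binary): $w_{min}/w_{max}>1/2$. *)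

(* Defs.v *)
From mathcomp Require Import all_boot all_order all_algebra.
Set Implicit Arguments. Unset Strict Implicit. Unset Printing Implicit Defensive.
Import GRing.Theory Num.Theory.
Local Open Scope ring_scope.

Definition supp n (x : 'rV['F_2]_n) : {set 'I_n} := [set j | x 0 j != 0].
Definition wt n (x : 'rV['F_2]_n) : nat := #|supp x|.

(* The code generated by G : 'M_(k,n) is { u *m G | u : 'rV_k }. *)
Definition maxwt k n (G : 'M['F_2]_(k, n)) : nat :=
  \max_(u : 'rV['F_2]_k) wt (u *m G).
(* minimum nonzero weight (= minimum distance) of the code;
   the default value n is only used for the zero code *)
Definition minwt k n (G : 'M['F_2]_(k, n)) : nat :=
  \big[minn/n]_(u : 'rV['F_2]_k | (u *m G != 0)%R) wt (u *m G).

Definition projective k n (G : 'M['F_2]_(k, n)) : Prop :=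
  (forall j, col j G != 0) /\ injective (fun j => col j G).

Definition simplex_complement k n h N (G0 : 'M['F_2]_(k, n))
    (G1 : 'M['F_2]_(k + h, N)) : Prop :=
  injective (fun j => col j G1) /\
  forall v : 'cV['F_2]_(k + h),
    (exists j, col j G1 = v) <->
    (v != 0 /\ forall j, v <> col_mx (col j G0) (0 : 'cV['F_2]_h)).

(* R is a basis (rows r_1..r_K, indexed from 0) of the code generated by G
   with wt r_1 = maximum weight and wt r_2 = minimum weight. *)
Definition extension_basis K N (G R : 'M['F_2]_(K, N)) : Prop :=
  row_free R /\ (R == G)%MS /\
  (forall i : 'I_K, val i = 0%N -> wt (row i R) = maxwt G) /\
  (forall i : 'I_K, val i = 1%N -> wt (row i R) = minwt G).

Definition ext_matrix K N p (R : 'M['F_2]_(K, N)) : 'M['F_2]_(K, p + N) :=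
  row_mx (\matrix_(i < K, j < p) (if val i == 0%N then 1 else 0)) R.

Definition minimal_code k n (G : 'M['F_2]_(k, n)) : Prop :=
  forall u v : 'rV['F_2]_k, u *m G != 0 -> v *m G != 0 ->
    supp (u *m G) \subset supp (v *m G) -> u *m G = v *m G.

Definition ashikhmin_barg k n (G : 'M['F_2]_(k, n)) : Prop :=
  (1 / 2 : rat) < (minwt G)%:R / (maxwt G)%:R.

(* Main.v *)
Require Import Defs.
From mathcomp Require Import all_boot all_order all_algebra zify.
Set Implicit Arguments. Unset Strict Implicit. Unset Printing Implicit Defensive.
Import GRing.Theory.
From mathcomp Require Import ring.
Local Open Scope ring_scope.

Lemma F2cases (x : 'F_2) : x = 0 \/ x = 1.
Proof. case: x. case. move=> H; left; exact: val_inj. case. move=> H; right; exact: val_inj. by []. Qed.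
Lemma F2add (x : 'F_2) : x + x = 0.
Proof. by case: (F2cases x) => ->; [rewrite addr0 | apply/eqP]. Qed.

Lemma F2addM m n (A : 'M['F_2]_(m, n)) : A + A = 0.
Proof. by apply/matrixP => a b; rewrite !mxE F2add. Qed.

Lemma wt_le n (x : 'rV['F_2]_n) : (wt x <= n)%N.
Proof. by rewrite /wt -[X in (_ <= X)%N]card_ord max_card. Qed.

Lemma minwt_le k n (G : 'M['F_2]_(k,n)) u : u *m G != 0 -> (minwt G <= wt (u *m G))%N.
Proof.
move=> H; rewrite /minwt.
have : u \in index_enum ('rV['F_2]_k : finType) by rewrite mem_index_enum.
elim: (index_enum _) => // x r IH; rewrite inE big_cons => /orP [/eqP<-|/IH].
  by rewrite H geq_minl.
by case: (_ != 0) => // Hr; exact: leq_trans (geq_minr _ _) Hr.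
Qed.

Lemma minwt_ge k n (G : 'M['F_2]_(k,n)) w :
  (forall u, u *m G != 0 -> (w <= wt (u *m G))%N) -> (w <= n)%N -> (w <= minwt G)%N.
Proof.
move=> H Hn; rewrite /minwt; apply: (big_ind (fun x => w <= x)%N) => //.
by move=> x y Hx Hy; rewrite leq_min Hx Hy.
Qed.

Lemma minwt_eq k n (G : 'M['F_2]_(k,n)) w u0 :
  u0 *m G != 0 -> wt (u0 *m G) = w ->
  (forall u, u *m G != 0 -> (w <= wt (u *m G))%N) -> minwt G = w.
Proof.
move=> H0 E H; apply/eqP; rewrite eqn_leq; apply/andP; split.
  by rewrite -E minwt_le.
by apply: minwt_ge => //; rewrite -E wt_le.
Qed.

Lemma maxwt_ge k n (G : 'M['F_2]_(k,n)) u : (wt (u *m G) <= maxwt G)%N.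
Proof. rewrite /maxwt; exact: (@leq_bigmax _ (fun u => wt (u *m G)) u). Qed.

Lemma maxwt_eq k n (G : 'M['F_2]_(k,n)) w u0 :
  wt (u0 *m G) = w -> (forall u, (wt (u *m G) <= w)%N) -> maxwt G = w.
Proof.
move=> E H; apply/eqP; rewrite eqn_leq; apply/andP; split.
  by apply/bigmax_leqP => u _; apply: H.
by rewrite -E maxwt_ge.
Qed.

Lemma wt_sum n (x : 'rV['F_2]_n) : wt x = (\sum_j nat_of_bool (x 0%R j != 0%R))%N.
Proof.
rewrite /wt /supp -sum1_card big_mkcond /=; apply: eq_bigr => j _.
by rewrite inE; case: (x 0 j != 0).
Qed.

Lemma wt_row_mx n1 n2 (x : 'rV['F_2]_n1) (y : 'rV['F_2]_n2) :
  wt (row_mx x y) = (wt x + wt y)%N.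
Proof.
rewrite !wt_sum big_split_ord /=; congr (_ + _)%N; apply: eq_bigr => j _.
  by rewrite row_mxEl. by rewrite row_mxEr.
Qed.

Lemma wt_const n (b : 'F_2) : wt (\row_(j < n) b) = (nat_of_bool (b != 0%R) * n)%N.
Proof.
rewrite wt_sum (eq_bigr (fun _ => nat_of_bool (b != 0))); last by move=> j _; rewrite mxE.
by rewrite sum_nat_const card_ord mulnC.
Qed.

Lemma wt0 n : wt (0 : 'rV['F_2]_n) = 0%N.
Proof. by rewrite wt_sum big1 // => j _; rewrite mxE eqxx. Qed.

Lemma wt_eq0 n (x : 'rV['F_2]_n) : (wt x == 0%N) = (x == 0).
Proof.
apply/idP/idP; last by move/eqP->; rewrite wt0.
rewrite /wt cards_eq0 => /eqP H; apply/eqP/rowP => j; rewrite mxE.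
apply/eqP; apply: contraT => Hj.
by have : j \in supp x; [rewrite inE | rewrite H inE].
Qed.

Lemma wt_nested n (x y : 'rV['F_2]_n) : supp x \subset supp y ->
  wt y = (wt x + wt (x + y))%N.
Proof.
move=> S.
have E : supp (x + y) = supp y :\: supp x.
  apply/setP => j; rewrite !inE mxE.
  have := subsetP S j; rewrite !inE.
  case: (F2cases (x 0 j)) => ->; case: (F2cases (y 0 j)) => ->;
  by rewrite ?F2add ?addr0 ?add0r ?eqxx ?oner_eq0 //=; move/(_ isT).
rewrite /wt E -(cardsID (supp x) (supp y)); congr (_ + _)%N.
by move/setIidPr: S => ->.
Qed.

Lemma entry_col k n (u : 'rV['F_2]_k) (G : 'M['F_2]_(k, n)) j :
  (u *m G) 0 j = (u *m col j G) 0 0.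
Proof. rewrite !mxE. apply: eq_bigr => i _. by rewrite /col mxE. Qed.

Lemma wt_col k n (u : 'rV['F_2]_k) (G : 'M['F_2]_(k, n)) :
  wt (u *m G) = #|[set j | (u *m col j G) 0 0 != 0]|.
Proof. rewrite /wt /supp; apply: eq_card => j. by rewrite !inE (entry_col u G j). Qed.

Lemma count_half K (u : 'rV['F_2]_K) : u != 0 ->
  double #|[set v : 'cV['F_2]_K | (u *m v) 0 0 != 0]| = (2 ^ K)%N.
Proof.
move=> Hu.
have [i Hi] : exists i, u 0 i != 0.
  apply/existsP; apply: contraR Hu => /existsPn H; apply/eqP/rowP => i.
  by rewrite mxE; apply/eqP; move: (H i); rewrite negbK.
set e : 'cV['F_2]_K := delta_mx i 0.
have ue : (u *m e) 0 0 = 1.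
  rewrite /e -colE /col mxE.
  by case: (F2cases (u 0 i)) Hi => -> //; rewrite eqxx.
set S := [set v : 'cV['F_2]_K | (u *m v) 0 0 != 0].
have Sd v : (u *m (v + e)) 0 0 = (u *m v) 0 0 + 1 by rewrite mulmxDr mxE ue.
have E : [set v + e | v in ~: S] = S.
  apply/setP => v; apply/imsetP/idP.
    case=> w; rewrite !inE negbK => /eqP Hw ->.
    by rewrite Sd Hw add0r oner_eq0.
  rewrite inE => Hv; exists (v + e); last by rewrite -addrA F2addM addr0.
  rewrite !inE negbK Sd.
  by case: (F2cases ((u *m v) 0 0)) Hv => -> //; rewrite ?eqxx // F2add.
have C : #|S| = #|~: S| by rewrite -{1}E card_imset //; exact: addIr.
by rewrite -addnn {2}C cardsC card_mx card_Fp // muln1.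
Qed.

Lemma wt_simplex k n h N (G0 : 'M['F_2]_(k, n)) (G1 : 'M['F_2]_(k + h, N)) :
  injective (fun j => col j G0) -> simplex_complement G0 G1 ->
  forall u, u != 0 -> wt (u *m G1) = (2 ^ (k + h).-1 - wt (lsubmx u *m G0))%N.
Proof.
move=> inj0 [inj1 HS] u Hu.
pose P := fun v : 'cV['F_2]_(k+h) => (u *m v) 0 0 != 0.
pose g := fun j => col_mx (col j G0) (0 : 'cV['F_2]_h).
have ginj : injective g.
  move=> j1 j2 /(congr1 (@usubmx _ k h 1)); rewrite !col_mxKu; exact: inj0.
have Pg j : P (g j) = ((lsubmx u *m col j G0) 0 0 != 0).
  by rewrite /P /g -{1}(hsubmxK u) mul_row_col mulmx0 addr0.
set S := [set v | P v].
set Pad := [set g j | j in [set: 'I_n]].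
have E1 : [set col j G1 | j in [set j | P (col j G1)]] = S :\: Pad.
  apply/setP => v; rewrite [in RHS]inE [in RHS]inE; apply/imsetP/andP.
  - case=> j; rewrite inE => Pj ->; split => //.
    apply/imsetP => -[j' _ Ej].
    have [_ H] := (HS (col j G1)).1 (ex_intro _ j erefl).
    exact: (H j').
  - case=> /imsetP Hn Pv.
    have [j Ej] : exists j, col j G1 = v.
      apply/HS; split.
        by apply: contraTneq Pv => ->; rewrite /P mulmx0 mxE eqxx.
      move=> j Ev; apply: Hn; exists j => //.
    by exists j => //; rewrite inE Ej.
have E2 : S :&: Pad = [set g j | j in [set j | P (g j)]].
  apply/setP => v; rewrite [in LHS]inE; apply/andP/imsetP.
  - case; rewrite inE => Pv /imsetP [j _ Ej]; exists j => //.
    by rewrite inE -Ej.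
  - case=> j; rewrite inE => Pj ->; split; first by rewrite inE.
    by apply/imsetP; exists j.
have pos : (0 < k + h)%N.
  rewrite lt0n; apply: contra Hu => /eqP E; apply/eqP/rowP => i.
  by have := ltn_ord i; rewrite {2}E.
have cS : #|S| = (2 ^ (k + h).-1)%N.
  apply: double_inj; rewrite count_half // -muln2 -expnSr prednK //.
rewrite wt_col -(card_imset _ inj1) E1 cardsD E2 (card_imset _ ginj) cS.
congr (_ - _)%N; rewrite wt_col; apply: eq_card => j; by rewrite !inE Pg.
Qed.
Lemma arith (m h : nat) : odd m -> (5 <= m)%N -> (1 <= h)%N ->
  [/\ 2 ^ (m - 2) = 2 * 2 ^ (m - 3), 2 ^ ((m - 1) %/ 2) = 2 * 2 ^ ((m - 3) %/ 2),
    2 ^ (m + h - 1) = 2 * 2 ^ (m + h - 2) &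
   [/\ 4 * 2 ^ (m - 3) <= 2 ^ (m + h - 2), 2 * 2 ^ ((m - 3) %/ 2) <= 2 ^ (m - 3),
    1 <= 2 ^ ((m - 3) %/ 2) & (m - 1 + h).-1 = m + h - 2]]%N.
Proof.
move=> Hodd Hm Hh.
have Et : m = (m./2).*2.+1 by rewrite -{1}(odd_double_half m) Hodd.
set t := m./2 in Et.
have e3 : ((m - 3) %/ 2 = t.-1)%N by rewrite Et -muln2; lia.
have e1 : ((m - 1) %/ 2 = t)%N by rewrite Et -muln2; lia.
have ex : forall a b, a = b.+1 -> (2 ^ a = 2 * 2 ^ b)%N by move=> a b ->; rewrite expnS.
rewrite e3 e1.
split.
- by apply: ex; lia.
- by apply: ex; lia.
- by apply: ex; lia.
split.
- have -> : (m + h - 2 = (m - 3) + h.-1.+2)%N by lia.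
  rewrite expnD mulnC !expnS !mulnA; have := expn_gt0 2 h.-1; nia.
- have -> : (m - 3 = t.-1 + (t.-1 - 1).+1)%N by lia.
  rewrite expnD expnS; have := expn_gt0 2 t.-1; have := expn_gt0 2 (t.-1 - 1); nia.
- by rewrite expn_gt0.
- lia.
Qed.

Theorem proposition4p5 (m h : nat) :
  odd m -> (5 <= m)%N -> (1 <= h)%N ->
  forall G0 : 'M['F_2]_(m - 1, 2 ^ (m - 2)),
    projective G0 -> \rank G0 = (m - 1)%N ->
    minwt G0 = (2 ^ (m - 3) - 2 ^ ((m - 3) %/ 2))%N ->
    maxwt G0 = (2 ^ (m - 3) + 2 ^ ((m - 3) %/ 2))%N ->
  forall G1 : 'M['F_2]_(m - 1 + h, 2 ^ (m + h - 1) - 2 ^ (m - 2) - 1),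
    simplex_complement G0 G1 ->
  let n' := (2 ^ (m + h - 2) - 2 ^ (m - 2) - 2 ^ ((m - 1) %/ 2))%N in
  [/\ \rank G1 = (m - 1 + h)%N,
      minwt G1 = (2 ^ (m + h - 2) - 2 ^ (m - 3) - 2 ^ ((m - 3) %/ 2))%N,
      maxwt G1 = (2 ^ (m + h - 2))%N,
      (2 * minwt G1 - maxwt G1)%N = n' &
      forall R : 'M['F_2]_(m - 1 + h, 2 ^ (m + h - 1) - 2 ^ (m - 2) - 1),
        extension_basis G1 R ->
        let C' := ext_matrix n' R in
        [/\ minimal_code C',
            \rank C' = (m - 1 + h)%N,
            minwt C' = (2 ^ (m + h - 2) - 2 ^ (m - 3) - 2 ^ ((m - 3) %/ 2))%N,
            maxwt C' = (2 ^ (m + h - 1) - 2 ^ (m - 2) - 2 ^ ((m - 1) %/ 2))%N /\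
            maxwt C' = (2 ^ (m + h - 2) + n')%N &
            ~ ashikhmin_barg C']].
Proof.
move=> Hodd Hm Hh G0 [nz0 inj0] rk0 min0 max0 G1 HS n'.
have [a1 a2 a3 [a4 a5 a6 a7]] := arith Hodd Hm Hh.
set p := (2 ^ (m - 3))%N in a1 a4 a5 max0 *.
set q := (2 ^ ((m - 3) %/ 2))%N in a2 a5 a6 max0 *.
set P := (2 ^ (m + h - 2))%N in a3 a4 *.
have En' : n' = (P - 2 * p - 2 * q)%N by rewrite /n' a1 a2.
pose K := (m - 1 + h)%N.
have W1 u : u != 0 -> wt (u *m G1) = (P - wt (lsubmx u *m G0))%N.
  by move=> Hu; rewrite (wt_simplex inj0 HS Hu) a7.
have W1b u : u != 0 -> (P - p - q <= wt (u *m G1) <= P)%N.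
  move=> Hu; rewrite W1 //; have := maxwt_ge G0 (lsubmx u); rewrite max0; move: (wt _) => w; clear -a4 a5 a6; lia.
have nz1 (u : 'rV['F_2]_(m - 1 + h)) : (u *m G1 != 0) = (u != 0).
  apply/idP/idP; first by apply: contraNneq => ->; rewrite mul0mx.
  move=> Hu; move: (W1b u Hu); rewrite -wt_eq0; move: (wt _) => w; clear -a4 a5 a6; lia.
have rk1 : \rank G1 = K.
  apply/eqP; rewrite eqn_leq rank_leq_row row_leq_rank.
  apply/inj_row_free => v Hv; apply/eqP; by rewrite -[v == 0]negbK -nz1 Hv eqxx.
have cpos : (0 < #|'rV['F_2]_(m-1)|)%N by apply/card_gt0P; exists 0.
have [a0 Ha0] := eq_bigmax (fun a : 'rV['F_2]_(m-1) => wt (a *m G0)) cpos.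
have a0nz : a0 != 0.
  apply/eqP => E; move: Ha0; rewrite E mul0mx wt0 -/(maxwt G0) max0; clear -a6; lia.
have min1 : minwt G1 = (P - p - q)%N.
  have u0nz : row_mx a0 (0 : 'rV['F_2]_h) != 0.
    apply/eqP; rewrite -(@row_mx0 _ 1 (m-1) h) => /eq_row_mx [Ea _].
    by move/eqP: a0nz.
  apply: (minwt_eq (u0 := row_mx a0 0)).
  - by rewrite nz1.
  - by rewrite W1 // row_mxKl -Ha0 -/(maxwt G0) max0; clear -a4 a5 a6; lia.
  - by move=> u; rewrite nz1 => /W1b /andP [].
have max1 : maxwt G1 = P.
  have b0 : (const_mx 1 : 'rV['F_2]_h) != 0.
    apply/eqP => /rowP /(_ (Ordinal Hh)); rewrite !mxE => /eqP; by rewrite oner_eq0.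
  have u0nz : row_mx (0 : 'rV['F_2]_(m-1)) (const_mx 1 : 'rV['F_2]_h) != 0.
    apply/eqP; rewrite -(@row_mx0 _ 1 (m-1) h) => /eq_row_mx [_ Ea].
    by move/eqP: b0.
  apply: (maxwt_eq (u0 := row_mx 0 (const_mx 1))).
  - by rewrite W1 // row_mxKl mul0mx wt0 subn0.
  - move=> u; case: (eqVneq u 0) => [->|Hu]; first by rewrite mul0mx wt0.
    by case/andP: (W1b u Hu).
have diff : (2 * minwt G1 - maxwt G1)%N = n' by rewrite min1 max1 En'; clear -a4 a5 a6; lia.
split => //.
move=> R [frR [eqR [H0 H1]]] C'.
case/andP: eqR => /submxP [D ED] _.
have K0 : (0 < K)%N by rewrite /K; clear -Hm; lia.
have K1 : (1 < K)%N by rewrite /K; clear -Hm; lia.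
pose i0 := Ordinal K0. pose i1 := Ordinal K1.
have r0 : wt (row i0 R) = P by rewrite H0 // max1.
have r1 : wt (row i1 R) = (P - p - q)%N by rewrite H1 // min1.
have cw (c : 'rV['F_2]_(m - 1 + h)) : c *m C' = row_mx (\row_(j < n') c 0 i0) (c *m R).
  rewrite /C' /ext_matrix mul_mx_row; congr row_mx; apply/rowP => j.
  rewrite !mxE (bigD1 i0) //= big1 => [|i Hi]; rewrite !mxE /=.
    by rewrite mulr1 addr0.
  case: eqP => [Ei|_]; last by rewrite mulr0.
  by case/eqP: Hi; apply: val_inj.
have wC (c : 'rV['F_2]_(m - 1 + h)) : wt (c *m C') = (nat_of_bool (c 0%R i0 != 0%R) * n' + wt (c *m R))%N.
  by rewrite cw wt_row_mx wt_const.
have wR (c : 'rV['F_2]_(m - 1 + h)) : c != 0 -> (P - p - q <= wt (c *m R) <= P)%N.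
  move=> Hc; have HcR : c *m R != 0 by rewrite mulmx_free_eq0.
  rewrite -min1 -max1 ED mulmxA maxwt_ge andbT minwt_le //.
  by rewrite -mulmxA -ED.
have nzC (c : 'rV['F_2]_(m - 1 + h)) : (c *m C' != 0) = (c != 0).
  apply/idP/idP; first by apply: contraNneq => ->; rewrite mul0mx.
  move=> Hc; move: (wR c Hc); rewrite -wt_eq0 wC En'; case: (c 0%R i0 != 0%R); rewrite /=; move: (wt _) => w; clear -a4 a5 a6; lia.
have npos : (0 < n')%N by rewrite En'; clear -a4 a5 a6; lia.
have minC : minwt C' = (P - p - q)%N.
  have e1nz : delta_mx 0 i1 != 0 :> 'rV['F_2]_K.
    apply/eqP => /rowP /(_ i1); rewrite !mxE !eqxx /= => /eqP; by rewrite oner_eq0.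
  apply: (minwt_eq (u0 := delta_mx 0 i1)).
  - by rewrite nzC.
  - by rewrite wC -rowE r1 mxE /= ?eqxx /=.
  - move=> c; rewrite nzC => /wR; rewrite wC En'; case: (c 0%R i0 != 0%R); rewrite /=; move: (wt _) => w; clear -a4 a5 a6; lia.
have maxC : maxwt C' = (n' + P)%N.
  apply: (maxwt_eq (u0 := delta_mx 0 i0)).
  - by rewrite wC -rowE r0 mxE !eqxx /= mul1n.
  - move=> c; case: (eqVneq c 0) => [->|Hc]; first by rewrite mul0mx wt0.
    move: (wR c Hc); rewrite wC En'; case: (c 0%R i0 != 0%R); rewrite /=; move: (wt _) => w; clear -a4 a5 a6; lia.
split.
- move=> u v Hx Hy Hs; apply/eqP; apply: contraT => Hxy.
  have Hz : (u + v) *m C' != 0.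
    rewrite mulmxDl; apply: contra Hxy => /eqP E.
    by rewrite -[v *m C']add0r -(F2addM (u *m C')) -addrA E addr0.
  have := wt_nested Hs; rewrite -mulmxDl.
  move: Hx Hy Hz; rewrite !nzC => /wR Hu /wR Hv /wR Huv.
  rewrite !wC mxE.
  case: (F2cases (u 0 i0)) => ->; case: (F2cases (v 0 i0)) => ->;
    rewrite ?F2add ?addr0 ?add0r ?eqxx ?oner_eq0 /= En';
    move: Hu Hv Huv; move: (wt (u *m R)) (wt (v *m R)) (wt ((u + v) *m R)) => wu wv wz;
    clear -a4 a5 a6; lia.
- apply/eqP; rewrite eqn_leq rank_leq_row row_leq_rank.
  apply/inj_row_free => c Hc; apply/eqP; by rewrite -[c == 0]negbK -nzC Hc eqxx.
- by rewrite minC.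
- by rewrite maxC En' a1 a2 a3; split; clear -a4 a5 a6; lia.
- rewrite /ashikhmin_barg minC maxC.
  have -> : (n' + P = 2 * (P - p - q))%N by rewrite En'; clear -a4 a5 a6; lia.
  have Apos : (P - p - q)%:R != 0 :> rat by rewrite Num.Theory.pnatr_eq0; clear -a4 a5 a6; lia.
  rewrite natrM.
  have -> : (P - p - q)%:R / (2%:R * (P - p - q)%:R) = 1 / 2 :> rat.
    by field; rewrite Apos.
  by rewrite Order.POrderTheory.ltxx.
Qed.
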